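(* Let $R$ be a commutative ring and let $(A,d)$ be a left dg-semiprimary, left dg-Artinian differential graded $R$-algebra whose dg-radical $\mathrm{dgrad}_2(A)$ is nilpotent. Then $(A,d)$ is left dg-Noetherian and acyclic.
   Context: A differential graded (dg) $R$-algebra $(A,d)$ is a $\mathbb{Z}$-graded $R$-algebra $A$ with an $R$-linear degree-$1$ endomorphism $d$, $d^2=0$, $d(ab)=d(a)b+(-1)^{|a|}a\,d(b)$ for homogeneous $a,b$. A left dg-module $(M,\delta)$ is a graded left $A$-module with a degree-$1$ map $\delta$, $\delta^2=0$, $\delta(am)=d(a)m+(-1)^{|a|}a\,\delta(m)$; dg-submodules are graded submodules stable under $\delta$; $(S,\delta)$ is dg-simple if $S\ne0$ and its only dg-submodules are $0,S$. $(A,d)$ is left dg-Noetherian (resp. left dg-Artinian) if $A$, as left dg-module over itself, satisfies the ascending (resp. descending) chain condition on dg-submodules (left dg-ideals). Acyclic means $\ker(d)=\operatorname{im}(d)$. The dg-radical is $\mathrm{dgrad}_2(A)=\bigcap_{(S,\delta)}\operatorname{ann}(S,\delta)$, the intersection over all dg-simple left dg-modules of their left annihilators in $A$. $(A,d)$ is left dg-semiprimary if (i) $(A/\mathrm{dgrad}_2(A),\bar d)$ is semisimple in the categorical sense, i.e. every short exact sequence of left dg-modules over it splits, and (ii) every homogeneous idempotent of $A/\mathrm{dgrad}_2(A)$ is the image of a homogeneous idempotent of $A$ under the natural map. *)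

(* Defs.v *)
From HB Require Import structures.
From mathcomp Require Import all_boot all_order all_algebra.
Set Implicit Arguments.
Unset Strict Implicit.
Unset Printing Implicit Defensive.
Import GRing.Theory.
Local Open Scope ring_scope.

Definition ksign (V : zmodType) (n : int) (x : V) : V :=
  if odd `|n|%N then - x else x.

(* A Z-grading of an abelian group V: h n = set of homogeneous elements of
   degree n; V = (+)_n V_n (internal direct sum of subgroups). *)
Definition graded_zmod (V : zmodType) (h : int -> V -> Prop) : Prop :=
  (forall n, h n 0) /\
  (forall n x y, h n x -> h n y -> h n (x - y)) /\
  (forall x : V, exists (s : seq int) (f : int -> V),
      ((uniq s) /\ ((forall n, n \in s -> h n (f n))) /\ (x = \sum_(n <- s) f n))) /\
  (forall (s : seq int) (f : int -> V), uniq s ->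
      (forall n, n \in s -> h n (f n)) -> \sum_(n <- s) f n = 0 ->
      forall n, n \in s -> f n = 0).

Definition graded_sub (V : zmodType) (h : int -> V -> Prop) (N : V -> Prop) :=
  forall x, N x -> forall (s : seq int) (f : int -> V), uniq s ->
    (forall n, n \in s -> h n (f n)) -> x = \sum_(n <- s) f n ->
    forall n, n \in s -> N (f n).

Section DG.
Variables (R : comPzRingType) (A : algType R).

Definition is_dg_algebra (hom : int -> A -> Prop) (d : A -> A) : Prop :=
  ((graded_zmod hom) /\ ((forall n (r : R) x, hom n x -> hom n (r *: x))) /\ ((forall m n a b, hom m a -> hom n b -> hom (m + n) (a * b))) /\ ((forall (r : R) x y, d (r *: x + y) = r *: d x + d y)) /\ ((forall n x, hom n x -> hom (n + 1) (d x))) /\ ((forall x, d (d x) = 0)) /\ ((forall n a b, hom n a -> d (a * b) = d a * b + ksign n (a * d b)))).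

Definition is_dg_module (hom : int -> A -> Prop) (d : A -> A)
    (M : zmodType) (act : A -> M -> M) (homM : int -> M -> Prop)
    (delta : M -> M) : Prop :=
  ((graded_zmod homM) /\ ((forall a x y, act a (x + y) = act a x + act a y)) /\ ((forall a b x, act (a + b) x = act a x + act b x)) /\ ((forall x, act 1 x = x)) /\ ((forall a b x, act (a * b) x = act a (act b x))) /\ ((forall m n a x, hom m a -> homM n x -> homM (m + n) (act a x))) /\ ((forall x y, delta (x + y) = delta x + delta y)) /\ ((forall n x, homM n x -> homM (n + 1) (delta x))) /\ ((forall x, delta (delta x) = 0) /\
      (forall n a x, hom n a ->
          delta (act a x) = act (d a) x + ksign n (act a (delta x))))).

Record dgmod (hom : int -> A -> Prop) (d : A -> A) := DGMod {
  dgM :> zmodType;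
  dg_act : A -> dgM -> dgM;
  dg_hom : int -> dgM -> Prop;
  dg_delta : dgM -> dgM;
  dg_ax : is_dg_module hom d dg_act dg_hom dg_delta }.

Arguments dg_act {hom d} _ _ _.
Arguments dg_hom {hom d} _ _ _.
Arguments dg_delta {hom d} _ _.
Arguments dg_ax {hom d} _.
Variables (hom : int -> A -> Prop) (d : A -> A).

Definition is_dg_submod (M : dgmod hom d) (N : M -> Prop) : Prop :=
  ((N 0) /\ ((forall x y, N x -> N y -> N (x - y))) /\ ((forall a x, N x -> N (dg_act M a x))) /\ (graded_sub (dg_hom M) N) /\ ((forall x, N x -> N (dg_delta M x)))).

Definition dg_simple (M : dgmod hom d) : Prop :=
  (exists x : M, x <> 0) /\
  forall N : M -> Prop, is_dg_submod (M:=M) N -> (forall x, N x -> x = 0) \/ (forall x, N x).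

Definition is_left_dg_ideal (I : A -> Prop) : Prop :=
  ((I 0) /\ ((forall x y, I x -> I y -> I (x - y))) /\ ((forall a x, I x -> I (a * x))) /\ (graded_sub hom I) /\ ((forall x, I x -> I (d x)))).

Definition left_dg_noetherian : Prop :=
  forall I : nat -> A -> Prop, (forall k, is_left_dg_ideal (I k)) ->
  (forall k x, I k x -> I k.+1 x) ->
  exists N, forall k, (N <= k)%N -> forall x, I k x <-> I N x.

Definition left_dg_artinian : Prop :=
  forall I : nat -> A -> Prop, (forall k, is_left_dg_ideal (I k)) ->
  (forall k x, I k.+1 x -> I k x) ->
  exists N, forall k, (N <= k)%N -> forall x, I k x <-> I N x.

Definition acyclic : Prop :=
  forall x : A, d x = 0 <-> exists y, x = d y.

Definition dgrad (a : A) : Prop :=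
  forall M : dgmod hom d, dg_simple M -> forall m : M, dg_act M a m = 0.

Definition annihilated_by (J : A -> Prop) (M : dgmod hom d) : Prop :=
  forall a, J a -> forall m : M, dg_act M a m = 0.

Definition dg_morph (M1 M2 : dgmod hom d) (f : M1 -> M2) : Prop :=
  (((forall x y, f (x + y) = f x + f y)) /\ ((forall a x, f (dg_act M1 a x) = dg_act M2 a (f x))) /\ ((forall n x, dg_hom M1 n x -> dg_hom M2 n (f x))) /\ ((forall x, f (dg_delta M1 x) = dg_delta M2 (f x)))).

(* Left dg-modules over (A/J, dbar) are identified with the left dg-modules
   over (A, d) annihilated by J (isomorphism of categories). *)
Definition dg_semisimple_quot (J : A -> Prop) : Prop :=
  forall (M1 M2 M3 : dgmod hom d),
  annihilated_by J M1 -> annihilated_by J M2 -> annihilated_by J M3 ->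
  forall (f : M1 -> M2) (g : M2 -> M3), dg_morph f -> dg_morph g ->
  injective f -> (forall z, exists y, g y = z) ->
  (forall y, g y = 0 <-> exists x, y = f x) ->
  exists s : M3 -> M2, dg_morph s /\ forall z, g (s z) = z.

Definition left_dg_semiprimary : Prop :=
  dg_semisimple_quot dgrad /\
  (forall x, (exists n, hom n x) -> dgrad (x * x - x) ->
     exists e, ((exists n, hom n e) /\ (e * e = e) /\ (dgrad (e - x)))).

Definition dgrad_nilpotent : Prop :=
  exists n : nat, forall f : 'I_n -> A, (forall i, dgrad (f i)) ->
    \prod_(i < n) f i = 0.

End DG.

(* Main.v *)
Require Import Defs.
From HB Require Import structures.
From mathcomp Require Import all_boot all_order all_algebra zify.
From mathcomp Require Import boolp.
From Stdlib Require Import ClassicalEpsilon.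
Set Implicit Arguments.
Unset Strict Implicit.
Unset Printing Implicit Defensive.
Import GRing.Theory.
Local Open Scope ring_scope.


Lemma oddD_abs (m n : int) : odd `|(m + n)%R|%N = odd `|m|%N (+) odd `|n|%N.
Proof.
have oP : forall x b, odd x = b -> (x %% 2 = b)%N by move=> x b <-; rewrite modn2.
case Hm: (odd `|m|%N); case Hn: (odd `|n|%N); case Hmn: (odd `|(m+n)%R|%N) => //=;
move/oP: Hm; move/oP: Hn; move/oP: Hmn => /= *; lia.
Qed.

Section KSign.
Variable V : zmodType.
Lemma ksignD n (x y : V) : ksign n (x + y) = ksign n x + ksign n y.
Proof. by rewrite /ksign; case: ifP => _ //; rewrite opprD. Qed.
Lemma ksignN n (x : V) : ksign n (- x) = - ksign n x.
Proof. by rewrite /ksign; case: ifP. Qed.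
Lemma ksign0 n : ksign n (0 : V) = 0.
Proof. by rewrite /ksign; case: ifP => _ //; rewrite oppr0. Qed.
Lemma ksignB n (x y : V) : ksign n (x - y) = ksign n x - ksign n y.
Proof. by rewrite ksignD ksignN. Qed.
Lemma ksignK n (x : V) : ksign n (ksign n x) = x.
Proof. by rewrite /ksign; case: (odd _) => //; rewrite opprK. Qed.
Lemma ksign_add m n (x : V) : ksign (m + n) x = ksign m (ksign n x).
Proof.
rewrite /ksign oddD_abs; case: (odd `|m|%N); case: (odd `|n|%N) => //=; rewrite ?opprK //.
Qed.
Lemma ksign_0 (x : V) : ksign 0 x = x.
Proof. by []. Qed.
Lemma ksignS n (x : V) : ksign (n + 1) x = - ksign n x.
Proof. by rewrite addrC ksign_add. Qed.
Lemma ksign_cases n (x : V) : ksign n x = x \/ ksign n x = - x.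
Proof. by rewrite /ksign; case: ifP; [right|left]. Qed.
End KSign.

Lemma sum_mask (W : zmodType) (t s : seq int) (f : int -> W) :
  uniq t -> uniq s -> {subset s <= t} ->
  \sum_(n <- t) (if n \in s then f n else 0) = \sum_(n <- s) f n.
Proof.
move=> ut us sst; rewrite -big_mkcond -big_filter; apply: perm_big.
apply: uniq_perm; first by rewrite filter_uniq.
  by [].
move=> n; rewrite mem_filter; apply/andP/idP => [[]//|ns]; split=> //; exact: sst.
Qed.

Section Graded.
Variables (V : zmodType) (h : int -> V -> Prop).

Definition hdec (x : V) : seq int * (int -> V) :=
  epsilon (inhabits ([::], fun _ => 0)) (fun p => uniq p.1 /\
    (forall n, n \in p.1 -> h n (p.2 n)) /\ x = \sum_(n <- p.1) p.2 n).
Definition hsupp x := (hdec x).1.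
Definition hcomp n x := if n \in hsupp x then (hdec x).2 n else 0.

Hypothesis Hg : graded_zmod h.

Lemma h0 n : h n 0. Proof. by case: Hg. Qed.
Lemma hB n x y : h n x -> h n y -> h n (x - y).
Proof. by case: Hg => _ [H _]; apply: H. Qed.
Lemma hN n x : h n x -> h n (- x).
Proof. by move=> H; rewrite -sub0r; apply: hB => //; apply: h0. Qed.
Lemma hD n x y : h n x -> h n y -> h n (x + y).
Proof. by move=> Hx Hy; rewrite -[y]opprK; apply: hB => //; apply: hN. Qed.
Lemma h_sum n (I : Type) (r : seq I) (P : pred I) (F : I -> V) :
  (forall i, P i -> h n (F i)) -> h n (\sum_(i <- r | P i) F i).
Proof. move=> H; apply: big_ind => //; [exact: h0 | exact: hD]. Qed.
Lemma h_ksign n m x : h n x -> h n (ksign m x).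
Proof. by move=> H; case: (ksign_cases m x) => ->//; apply: hN. Qed.

Lemma dec_spec x : uniq (hsupp x) /\ (forall n, n \in hsupp x -> h n ((hdec x).2 n))
   /\ x = \sum_(n <- hsupp x) (hdec x).2 n.
Proof.
have E : exists p : seq int * (int -> V), uniq p.1 /\
    (forall n, n \in p.1 -> h n (p.2 n)) /\ x = \sum_(n <- p.1) p.2 n.
  case: Hg => _ [_ [H _]]; case: (H x) => s [f Hf]; by exists (s, f).
exact: (epsilon_spec (inhabits ([::], fun _ => 0)) _ E).
Qed.

Lemma comp_eq s f x : uniq s -> (forall n, n \in s -> h n (f n)) ->
  x = \sum_(n <- s) f n -> forall n, hcomp n x = if n \in s then f n else 0.
Proof.
move=> us hs xe.
have [u0 [h0s x0e]] := dec_spec x.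
set s0 := hsupp x in u0 h0s x0e *; set f0 := (hdec x).2 in h0s x0e *.
set t := undup (s0 ++ s).
pose g n := (if n \in s0 then f0 n else 0) - (if n \in s then f n else 0).
have ut : uniq t by apply: undup_uniq.
have sub1 : {subset s0 <= t} by move=> n nt; rewrite mem_undup mem_cat nt.
have sub2 : {subset s <= t} by move=> n nt; rewrite mem_undup mem_cat nt orbT.
have sg : \sum_(n <- t) g n = 0.
  by rewrite sumrB !sum_mask // -x0e -xe subrr.
have hgn : forall n, n \in t -> h n (g n).
  move=> n _; apply: hB; case: ifP => H; (try apply: h0); [exact: h0s | exact: hs].
case: Hg => _ [_ [_ Hu]].
move=> n; rewrite /hcomp -/s0 -/f0.
case nt: (n \in t).
  by have /eqP := Hu t g ut hgn sg n nt; rewrite subr_eq0 => /eqP.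
move: nt; rewrite mem_undup mem_cat.
by case: (n \in s0); case: (n \in s).
Qed.

Lemma comp_hom n x : h n (hcomp n x).
Proof.
rewrite /hcomp; case: ifP => H; last exact: h0.
by have [_ [hs _]] := dec_spec x; apply: hs.
Qed.

Lemma comp_supp n x : n \notin hsupp x -> hcomp n x = 0.
Proof. by rewrite /hcomp => /negbTE ->. Qed.

Lemma supp_uniq x : uniq (hsupp x).
Proof. by case: (dec_spec x). Qed.

Lemma sum_comp x : x = \sum_(n <- hsupp x) hcomp n x.
Proof.
have [_ [_ e]] := dec_spec x; rewrite {1}e.
by apply: eq_big_seq => n ns; rewrite /hcomp ns.
Qed.

Lemma sum_comp_super t x : uniq t -> {subset hsupp x <= t} ->
  \sum_(n <- t) hcomp n x = x.
Proof.
move=> ut st.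
rewrite (eq_bigr (fun n => if n \in hsupp x then hcomp n x else 0)).
  by rewrite sum_mask ?supp_uniq // -sum_comp.
by move=> n _; case: ifP => // /negbT H; rewrite comp_supp.
Qed.

Lemma comp_add n x y : hcomp n (x + y) = hcomp n x + hcomp n y.
Proof.
set t := undup (hsupp x ++ hsupp y).
have ut : uniq t by apply: undup_uniq.
have e : x + y = \sum_(n <- t) (hcomp n x + hcomp n y).
  rewrite big_split /= !sum_comp_super // => m mt; rewrite mem_undup mem_cat mt ?orbT //.
rewrite (comp_eq ut _ e); last by move=> m _; apply: hD; apply: comp_hom.
case: ifP => // /negbT; rewrite mem_undup mem_cat negb_or => /andP [H1 H2].
by rewrite !comp_supp // addr0.
Qed.

Lemma comp0 n : hcomp n 0 = 0.
Proof. by apply: (addrI (hcomp n 0)); rewrite -comp_add !addr0. Qed.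
Lemma compN n x : hcomp n (- x) = - hcomp n x.
Proof. by apply/eqP; rewrite -addr_eq0 -comp_add addNr comp0. Qed.
Lemma compB n x y : hcomp n (x - y) = hcomp n x - hcomp n y.
Proof. by rewrite comp_add compN. Qed.
Lemma comp_sum n (I : Type) (r : seq I) (P : pred I) (F : I -> V) :
  hcomp n (\sum_(i <- r | P i) F i) = \sum_(i <- r | P i) hcomp n (F i).
Proof. by apply: (big_morph (hcomp n)); [apply: comp_add | apply: comp0]. Qed.

Lemma comp_homog m x n : h m x -> hcomp n x = if n == m then x else 0.
Proof.
move=> hx; have e : x = \sum_(k <- [:: m]) x by rewrite big_seq1.
rewrite (comp_eq (s := [:: m]) (f := fun _ => x)) //.
  by rewrite mem_seq1.
by move=> k; rewrite mem_seq1 => /eqP ->.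
Qed.

Lemma comp_ext x y : (forall n, hcomp n x = hcomp n y) -> x = y.
Proof.
move=> H; apply/eqP; rewrite -subr_eq0; apply/eqP.
rewrite (sum_comp (x - y)) big1 // => n _; by rewrite compB H subrr.
Qed.

Lemma hom_ind (P : V -> Prop) : P 0 -> (forall x y, P x -> P y -> P (x + y)) ->
  (forall n x, h n x -> P x) -> forall x, P x.
Proof.
move=> P0 PD Ph x; rewrite (sum_comp x); apply: big_ind => // n _.
exact: (Ph n _ (comp_hom n x)).
Qed.

Lemma graded_subP (N : V -> Prop) : N 0 ->
  (graded_sub h N <-> forall x, N x -> forall n, N (hcomp n x)).
Proof.
move=> N0; split.
  move=> H x Nx n; case ns: (n \in hsupp x); last by rewrite comp_supp ?ns.
  apply: (H x Nx (hsupp x) (fun n => hcomp n x)) => //.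
  - exact: supp_uniq.
  - by move=> m _; apply: comp_hom.
  - exact: sum_comp.
move=> H x Nx s f us hs e n ns.
by have := comp_eq us hs e n; rewrite ns => <-; apply: H.
Qed.

End Graded.

Lemma comp_shift (V W : zmodType) (h : int -> V -> Prop) (h' : int -> W -> Prop)
  (Hg : graded_zmod h) (Hg' : graded_zmod h') (phi : V -> W) (k : int) :
  (forall x y, phi (x + y) = phi x + phi y) ->
  (forall n v, h n v -> h' (n + k) (phi v)) ->
  forall n v, hcomp h' (n + k) (phi v) = phi (hcomp h n v).
Proof.
move=> pD ph n v.
have p0 : phi 0 = 0 by apply: (addrI (phi 0)); rewrite -pD !addr0.
have e : phi v = \sum_(m <- map (fun j => j + k) (hsupp h v)) phi (hcomp h (m - k) v).
  rewrite big_map {1}(sum_comp Hg v).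
  rewrite (big_morph phi pD p0); apply: eq_bigr => j _; by rewrite addrK.
have us : uniq (map (fun j => j + k) (hsupp h v)).
  by rewrite map_inj_uniq ?supp_uniq //; apply: addIr.
rewrite (comp_eq Hg' us _ e).
  rewrite (mem_map (f := fun j => j + k)); last by apply: addIr.
  rewrite addrK; case: ifP => // /negbT H; by rewrite comp_supp // p0.
move=> m /mapP [j _ ->]; rewrite addrK; apply: ph; exact: comp_hom.
Qed.


Section DGA.
Variables (R : comPzRingType) (A : algType R) (hom : int -> A -> Prop) (d : A -> A).
Hypothesis HA : is_dg_algebra hom d.

Lemma Agr : graded_zmod hom. Proof. by case: HA. Qed.
Lemma homM m n a b : hom m a -> hom n b -> hom (m + n) (a * b).
Proof. by case: HA => _ [_ [H _]]; apply: H. Qed.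
Lemma dlin (r : R) x y : d (r *: x + y) = r *: d x + d y.
Proof. by case: HA => _ [_ [_ [H _]]]; apply: H. Qed.
Lemma dhom n x : hom n x -> hom (n + 1) (d x).
Proof. by case: HA => _ [_ [_ [_ [H _]]]]; apply: H. Qed.
Lemma dd x : d (d x) = 0.
Proof. by case: HA => _ [_ [_ [_ [_ [H _]]]]]; apply: H. Qed.
Lemma dLeib n a b : hom n a -> d (a * b) = d a * b + ksign n (a * d b).
Proof. by case: HA => _ [_ [_ [_ [_ [_ H]]]]]; apply: H. Qed.

Lemma dD x y : d (x + y) = d x + d y.
Proof. by have := dlin 1 x y; rewrite !scale1r. Qed.
Lemma d0 : d 0 = 0.
Proof. by apply: (addrI (d 0)); rewrite -dD !addr0. Qed.
Lemma dN x : d (- x) = - d x.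
Proof. by have := dlin (-1) x 0; rewrite !addr0 d0 !scaleN1r addr0. Qed.
Lemma dB x y : d (x - y) = d x - d y.
Proof. by rewrite dD dN. Qed.
Lemma d_sum (I : Type) (r : seq I) (P : pred I) (F : I -> A) :
  d (\sum_(i <- r | P i) F i) = \sum_(i <- r | P i) d (F i).
Proof. by apply: (big_morph d); [apply: dD | apply: d0]. Qed.

Lemma hom1 : hom 0 1.
Proof.
have Hg := Agr.
have K : forall (n : int) (x : A), n != 0 -> hcomp hom n 1 * x = 0.
  move=> n x n0; move: x; apply: (hom_ind Hg (P := fun x : A => (hcomp hom n 1 * x = 0)%R)).
  - by rewrite /= mulr0.
  - by move=> x y /= Hx Hy; rewrite mulrDr Hx Hy addr0.
  move=> m x hx /=.
  have := comp_shift Hg Hg (phi := fun a => (a * x)%R) (k := m) _ _ n 1.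
  have E : (n + m == m) = false.
    by apply/negbTE; apply: contra n0 => /eqP E; apply/eqP; apply: (addIr m); rewrite add0r.
  rewrite mul1r (comp_homog Hg _ hx) E.
  move=> <- //; first by move=> *; rewrite mulrDl.
  by move=> j v hv; apply: homM.
have -> : (1 : A) = hcomp hom 0 1.
  apply: (comp_ext Hg) => n; rewrite (comp_homog Hg _ (comp_hom Hg 0 1)).
  case: eqP => [->//|/eqP n0]; by rewrite -[hcomp hom n 1]mulr1 K.
exact: comp_hom.
Qed.

Lemma d1 : d 1 = 0.
Proof.
have := dLeib 1 hom1; rewrite !mul1r mulr1 ksign_0 => E.
by apply: (addrI (d 1)); rewrite addr0 -E.
Qed.

Lemma comp_d n x : hcomp hom (n + 1) (d x) = d (hcomp hom n x).
Proof. by apply: (comp_shift Agr Agr) => //; [apply: dD | apply: dhom]. Qed.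

Lemma comp_mull m a n x : hom m a -> hcomp hom (n + m) (a * x) = a * hcomp hom n x.
Proof.
move=> ha; apply: (comp_shift Agr Agr (phi := fun x => a * x)); first by move=> *; rewrite mulrDr.
by move=> j v hv; rewrite addrC; apply: homM.
Qed.

Lemma homD n x y : hom n x -> hom n y -> hom n (x + y). Proof. move=> hx hy; exact: (hD Agr hx hy). Qed.
Lemma homN n x : hom n x -> hom n (- x). Proof. move=> hx; exact: (hN Agr hx). Qed.
Lemma homB n x y : hom n x -> hom n y -> hom n (x - y). Proof. move=> hx hy; exact: (hB Agr hx hy). Qed.
Lemma hom0 n : hom n 0. Proof. exact: (h0 Agr n). Qed.

Section Mod.
Variable M : dgmod hom d.
Local Notation act := (@dg_act R A hom d M).
Local Notation mhom := (@dg_hom R A hom d M).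
Local Notation delta := (@dg_delta R A hom d M).
Lemma Mgr : graded_zmod mhom. Proof. by case: (dg_ax M). Qed.
Lemma actDr a x y : act a (x + y) = act a x + act a y.
Proof. by case: (dg_ax M) => _ [H _]; apply: H. Qed.
Lemma actDl a b x : act (a + b) x = act a x + act b x.
Proof. by case: (dg_ax M) => _ [_ [H _]]; apply: H. Qed.
Lemma act1 x : act 1 x = x.
Proof. by case: (dg_ax M) => _ [_ [_ [H _]]]; apply: H. Qed.
Lemma actM a b x : act (a * b) x = act a (act b x).
Proof. by case: (dg_ax M) => _ [_ [_ [_ [H _]]]]; apply: H. Qed.
Lemma act_hom m n a x : hom m a -> mhom n x -> mhom (m + n) (act a x).
Proof. by case: (dg_ax M) => _ [_ [_ [_ [_ [H _]]]]]; apply: H. Qed.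
Lemma deltaD x y : delta (x + y) = delta x + delta y.
Proof. by case: (dg_ax M) => _ [_ [_ [_ [_ [_ [H _]]]]]]; apply: H. Qed.
Lemma delta_hom n x : mhom n x -> mhom (n + 1) (delta x).
Proof. by case: (dg_ax M) => _ [_ [_ [_ [_ [_ [_ [H _]]]]]]]; apply: H. Qed.
Lemma delta2 x : delta (delta x) = 0.
Proof. by case: (dg_ax M) => _ [_ [_ [_ [_ [_ [_ [_ [H _]]]]]]]]; apply: H. Qed.
Lemma deltaLeib n a x : hom n a -> delta (act a x) = act (d a) x + ksign n (act a (delta x)).
Proof. by case: (dg_ax M) => _ [_ [_ [_ [_ [_ [_ [_ [_ H]]]]]]]]; apply: H. Qed.

Lemma act0r a : act a 0 = 0.
Proof. by apply: (addrI (act a 0)); rewrite -actDr !addr0. Qed.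
Lemma act0l x : act 0 x = 0.
Proof. by apply: (addrI (act 0 x)); rewrite -actDl !addr0. Qed.
Lemma actNr a x : act a (- x) = - act a x.
Proof. by apply/eqP; rewrite -addr_eq0 -actDr addNr act0r. Qed.
Lemma actNl a x : act (- a) x = - act a x.
Proof. by apply/eqP; rewrite -addr_eq0 -actDl addNr act0l. Qed.
Lemma actBr a x y : act a (x - y) = act a x - act a y.
Proof. by rewrite actDr actNr. Qed.
Lemma actBl a b x : act (a - b) x = act a x - act b x.
Proof. by rewrite actDl actNl. Qed.
Lemma act_ksign n a x : act a (ksign n x) = ksign n (act a x).
Proof. by rewrite /ksign; case: ifP => // _; rewrite actNr. Qed.
Lemma delta0 : delta 0 = 0.
Proof. by apply: (addrI (delta 0)); rewrite -deltaD !addr0. Qed.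
Lemma deltaN x : delta (- x) = - delta x.
Proof. by apply/eqP; rewrite -addr_eq0 -deltaD addNr delta0. Qed.
Lemma deltaB x y : delta (x - y) = delta x - delta y.
Proof. by rewrite deltaD deltaN. Qed.
Lemma delta_ksign n x : delta (ksign n x) = ksign n (delta x).
Proof. by rewrite /ksign; case: ifP => // _; rewrite deltaN. Qed.
Lemma act_suml (I : Type) (r : seq I) (P : pred I) (F : I -> A) x :
  act (\sum_(i <- r | P i) F i) x = \sum_(i <- r | P i) act (F i) x.
Proof. by apply: (big_morph (fun a => act a x)); [move=> *; apply: actDl | apply: act0l]. Qed.
End Mod.

Notation J := (dgrad hom d).

Lemma J0 : J 0.
Proof. by move=> M _ m; apply: act0l. Qed.
Lemma JB x y : J x -> J y -> J (x - y).
Proof. by move=> Hx Hy M S m; rewrite actBl Hx // Hy // subrr. Qed.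
Lemma JN x : J x -> J (- x).
Proof. by move=> Hx; rewrite -sub0r; apply: JB => //; apply: J0. Qed.
Lemma JD x y : J x -> J y -> J (x + y).
Proof. by move=> Hx Hy; rewrite -[y]opprK; apply: JB => //; apply: JN. Qed.
Lemma J_sum (I : Type) (r : seq I) (P : pred I) (F : I -> A) :
  (forall i, P i -> J (F i)) -> J (\sum_(i <- r | P i) F i).
Proof. move=> H; apply: big_ind => //; [exact: J0 | exact: JD]. Qed.
Lemma Jmull a x : J x -> J (a * x).
Proof. by move=> Hx M S m; rewrite actM Hx // act0r. Qed.
Lemma Jmulr a x : J x -> J (x * a).
Proof. by move=> Hx M S m; rewrite actM Hx. Qed.
Lemma Jcomp x n : J x -> J (hcomp hom n x).
Proof.
move=> Hx M S; apply: (hom_ind (Mgr M) (P := fun m : M => (dg_act (hcomp hom n x) m = 0)%R)).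
- exact: act0r.
- by move=> u v /= Hu Hv; rewrite actDr Hu Hv addr0.
move=> k m hm /=.
have := comp_shift Agr (Mgr M) (phi := fun a => dg_act a m) (k := k) _ _ n x.
move=> <-.
- by rewrite (Hx M S m) (comp0 (Mgr M)).
- by move=> *; apply: actDl.
- by move=> j v hv; apply: act_hom.
Qed.
Lemma Jd x : J x -> J (d x).
Proof.
move=> Hx; rewrite (sum_comp Agr x) d_sum; apply: J_sum => n _.
have Hc := Jcomp n Hx; have hc := comp_hom Agr n x.
move=> M S m.
have := deltaLeib m hc; rewrite !(Hc M S) delta0 ksign0 addr0 => E.
by rewrite -E.
Qed.

Lemma J_ideal : is_left_dg_ideal hom d J.
Proof.
split; first exact: J0.
split; first exact: JB.
split; first by move=> *; apply: Jmull.
split; last exact: Jd.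
by apply/(graded_subP Agr J0) => x Hx n; apply: Jcomp.
Qed.

End DGA.


Section Ideals.
Variables (R : comPzRingType) (A : algType R) (hom : int -> A -> Prop) (d : A -> A).

Record dgideal := DGI { dgi :> A -> Prop; dgi_ax : is_left_dg_ideal hom d dgi }.

Variable I : dgideal.
Lemma I0 : I 0. Proof. by case: (dgi_ax I). Qed.
Lemma IB x y : I x -> I y -> I (x - y). Proof. by case: (dgi_ax I) => _ [H _]; apply: H. Qed.
Lemma IN x : I x -> I (- x). Proof. by move=> H; rewrite -sub0r; apply: IB => //; apply: I0. Qed.
Lemma ID x y : I x -> I y -> I (x + y).
Proof. by move=> Hx Hy; rewrite -[y]opprK; apply: IB => //; apply: IN. Qed.
Lemma Imul a x : I x -> I (a * x). Proof. by case: (dgi_ax I) => _ [_ [H _]]; apply: H. Qed.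
Lemma Igr : graded_sub hom I. Proof. by case: (dgi_ax I) => _ [_ [_ [H _]]]. Qed.
Lemma Id x : I x -> I (d x). Proof. by case: (dgi_ax I) => _ [_ [_ [_ H]]]; apply: H. Qed.
Lemma I_sum (J : Type) (r : seq J) (P : pred J) (F : J -> A) :
  (forall i, P i -> I (F i)) -> I (\sum_(i <- r | P i) F i).
Proof. move=> H; apply: big_ind => //; [exact: I0 | exact: ID]. Qed.
Lemma I_ksign n x : I x -> I (ksign n x).
Proof. by move=> H; case: (ksign_cases n x) => ->//; apply: IN. Qed.
End Ideals.
Arguments I0 {R A hom d} I.
Arguments Igr {R A hom d} I.


Section SQ.
Variables (R : comPzRingType) (A : algType R) (hom : int -> A -> Prop) (d : A -> A).
Variables (K L : dgideal hom d).

Definition canonK (x : A) : A := epsilon (inhabits 0) (fun y => K y /\ L (x - y)).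
Definition sqP (x : A) : bool := `[< K x /\ canonK x = x >].
Definition SQ := {x : A | sqP x}.
HB.instance Definition _ := [isSub of SQ for @sval A sqP].
HB.instance Definition _ := [Choice of SQ by <:].

Lemma canon_spec x : K x -> K (canonK x) /\ L (x - canonK x).
Proof.
move=> Kx; apply: (epsilon_spec (inhabits 0) (fun y => K y /\ L (x - y))).
by exists x; rewrite subrr; split=> //; apply: I0.
Qed.

Lemma canon_eq x y : L (x - y) -> canonK x = canonK y.
Proof.
move=> Lxy; rewrite /canonK; congr epsilon; apply: funext => z; apply: propext.
split=> -[Kz Lz]; split=> //.
  have -> : y - z = (x - z) - (x - y) by rewrite opprB [RHS]addrC addrA subrK.
  exact: IB.
have -> : x - z = (x - y) + (y - z) by rewrite addrA subrK.
exact: ID.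
Qed.

Lemma canon_idem x : K x -> canonK (canonK x) = canonK x.
Proof.
move=> Kx; apply: canon_eq; have [_ H] := canon_spec Kx.
by rewrite -opprB; apply: IN.
Qed.

Lemma sqP_canon x : K x -> sqP (canonK x).
Proof.
move=> Kx; apply/asboolP; split; first by case: (canon_spec Kx).
exact: canon_idem.
Qed.

Definition zeroSQ : SQ := Sub (canonK 0) (sqP_canon (I0 K)).
Definition pi (x : A) : SQ := insubd zeroSQ (canonK x).

Lemma val_pi x : K x -> val (pi x) = canonK x.
Proof. by move=> Kx; rewrite /pi insubdK //; apply: sqP_canon. Qed.

Lemma valP' (q : SQ) : K (val q) /\ canonK (val q) = val q.
Proof. by apply/asboolP; case: q. Qed.
Lemma valK (q : SQ) : K (val q). Proof. by case: (valP' q). Qed.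

Lemma pi_val (q : SQ) : pi (val q) = q.
Proof. by apply: val_inj; rewrite val_pi ?valK //; case: (valP' q). Qed.

Lemma pi_eq x y : K x -> K y -> (pi x = pi y <-> L (x - y)).
Proof.
move=> Kx Ky; split; last by move=> H; apply: val_inj; rewrite !val_pi //; apply: canon_eq.
move/(congr1 val); rewrite !val_pi // => E.
have [_ H1] := canon_spec Kx; have [_ H2] := canon_spec Ky.
have -> : x - y = (x - canonK x) - (y - canonK y) by rewrite E opprB addrA subrK.
exact: IB.
Qed.

Lemma Lpi x : K x -> L (val (pi x) - x).
Proof. by move=> Kx; rewrite val_pi // -opprB; apply: IN; case: (canon_spec Kx). Qed.

Lemma pi_vpi x : K x -> pi (val (pi x)) = pi x.
Proof. by move=> Kx; rewrite pi_val. Qed.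

Lemma pi_addl x y : K x -> K y -> pi (val (pi x) + y) = pi (x + y).
Proof.
move=> Kx Ky; apply/pi_eq; [apply: ID => //; exact: valK | exact: ID |].
by rewrite opprD addrACA subrr addr0; apply: Lpi.
Qed.
Lemma pi_addr x y : K x -> K y -> pi (x + val (pi y)) = pi (x + y).
Proof. by move=> Kx Ky; rewrite addrC pi_addl // addrC. Qed.
Lemma pi_oppv x : K x -> pi (- val (pi x)) = pi (- x).
Proof.
move=> Kx; apply/pi_eq; [apply: IN; exact: valK | exact: IN |].
by rewrite opprK addrC -opprB; apply: IN; apply: Lpi.
Qed.

Definition addSQ (q q' : SQ) : SQ := pi (val q + val q').
Definition oppSQ (q : SQ) : SQ := pi (- val q).

Lemma pi0 : pi 0 = zeroSQ.
Proof. by apply: val_inj; rewrite val_pi //; apply: I0. Qed.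

Lemma addSQA : associative addSQ.
Proof.
move=> a b c; rewrite /addSQ pi_addl ?pi_addr ?addrA //; try apply: ID; exact: valK.
Qed.
Lemma addSQC : commutative addSQ.
Proof. by move=> a b; rewrite /addSQ addrC. Qed.
Lemma add0SQ : left_id zeroSQ addSQ.
Proof.
move=> a; rewrite /addSQ -pi0 pi_addl ?add0r ?pi_val //; [exact: I0 | exact: valK].
Qed.
Lemma addNSQ : left_inverse zeroSQ oppSQ addSQ.
Proof.
move=> a; rewrite /addSQ /oppSQ pi_addl ?addNr ?pi0 //; [apply: IN|]; exact: valK.
Qed.

HB.instance Definition _ := GRing.isZmodule.Build SQ addSQA addSQC add0SQ addNSQ.

Lemma addSQE (q q' : SQ) : q + q' = pi (val q + val q'). Proof. by []. Qed.
Lemma oppSQE (q : SQ) : - q = pi (- val q). Proof. by []. Qed.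
Lemma zeroSQE : (0 : SQ) = pi 0. Proof. by rewrite pi0. Qed.

Lemma pi_add x y : K x -> K y -> pi (x + y) = pi x + pi y.
Proof. by move=> Kx Ky; rewrite addSQE pi_addl ?pi_addr //; exact: valK. Qed.
Lemma pi_opp x : K x -> pi (- x) = - pi x.
Proof. by move=> Kx; rewrite oppSQE pi_oppv. Qed.
Lemma pi_sub x y : K x -> K y -> pi (x - y) = pi x - pi y.
Proof. by move=> Kx Ky; rewrite pi_add ?pi_opp //; apply: IN. Qed.
Lemma pi_sum (J : Type) (r : seq J) (P : pred J) (F : J -> A) :
  (forall i, P i -> K (F i)) -> pi (\sum_(i <- r | P i) F i) = \sum_(i <- r | P i) pi (F i).
Proof.
move=> H; elim: r => [|j r IH]; first by rewrite !big_nil zeroSQE.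
rewrite !big_cons; case: ifP => Pj //; rewrite pi_add ?IH //; first exact: H.
exact: I_sum.
Qed.
Lemma pi_ksign n x : K x -> pi (ksign n x) = ksign n (pi x).
Proof. by move=> Kx; rewrite /ksign; case: ifP => // _; rewrite pi_opp. Qed.
Lemma pi_eq0 x : K x -> (pi x = 0 <-> L x).
Proof. by move=> Kx; rewrite zeroSQE pi_eq ?subr0 //; apply: I0. Qed.

Definition actSQ (a : A) (q : SQ) : SQ := pi (a * val q).
Definition homSQ (n : int) (q : SQ) : Prop := exists x, hom n x /\ K x /\ pi x = q.
Definition deltaSQ (q : SQ) : SQ := pi (d (val q)).

Lemma act_pi a x : K x -> actSQ a (pi x) = pi (a * x).
Proof.
move=> Kx; apply/pi_eq; [apply: Imul; exact: valK | exact: Imul |].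
by rewrite -mulrBr; apply: Imul; apply: Lpi.
Qed.

Hypothesis HA : is_dg_algebra hom d.

Lemma delta_pi x : K x -> deltaSQ (pi x) = pi (d x).
Proof.
move=> Kx; apply/pi_eq; [apply: Id; exact: valK | exact: Id |].
by rewrite -(dB HA); apply: Id; apply: Lpi.
Qed.

Lemma SQgr : graded_zmod homSQ.
Proof.
have Kgr := (graded_subP (Agr HA) (I0 K)).1 (Igr K).
have Lgr := Igr L.
split; first by move=> n; exists 0; split; [exact: (hom0 HA n) | split; [exact: I0 | exact: (esym zeroSQE)]].
split.
  move=> n _ _ [x [hx [Kx <-]]] [y [hy [Ky <-]]].
  exists (x - y); split; first exact: (homB HA).
  by split; [exact: IB | exact: pi_sub].
split.
  move=> q; exists (hsupp hom (val q)), (fun n => pi (hcomp hom n (val q))).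
  split; first exact: (supp_uniq (Agr HA)).
  split; first by move=> n _; exists (hcomp hom n (val q)); split; [exact: (comp_hom (Agr HA)) | split=> //; apply: Kgr; exact: valK].
  rewrite -pi_sum; first by rewrite -(sum_comp (Agr HA)) pi_val.
  by move=> n _; apply: Kgr; exact: valK.
move=> s f us hf sf.
pose g n := epsilon (inhabits 0) (fun x => hom n x /\ K x /\ pi x = f n).
have gs : forall n, n \in s -> hom n (g n) /\ K (g n) /\ pi (g n) = f n.
  by move=> n ns; apply: (epsilon_spec (inhabits 0) (fun x => hom n x /\ K x /\ pi x = f n)); apply: hf.
have Ks : forall n, n \in s -> K (g n) by move=> n /gs [_ []].
have Lg : L (\sum_(n <- s) g n).
  apply/pi_eq0; first by rewrite big_seq; apply: I_sum => n /Ks.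
  rewrite big_seq pi_sum; last by move=> n /Ks.
  apply: (etrans _ sf); rewrite [RHS]big_seq; apply: eq_bigr => n ns; by case: (gs n ns) => _ [].
move=> n ns.
have := Lgr _ Lg s g us (fun m ms => (gs m ms).1) (erefl _) n ns.
case: (gs n ns) => _ [Kn <-]; move/pi_eq0 => -> //.
Qed.

Lemma pi_vK (q : SQ) : exists x, K x /\ q = pi x.
Proof. by exists (val q); split; [exact: valK | rewrite pi_val]. Qed.

Ltac Kt := repeat first [ assumption | exact: valK | apply: ID | apply: IB | apply: IN | apply: Imul | apply: Id | apply: I_ksign ].

Lemma SQ_is_dg : is_dg_module hom d actSQ homSQ deltaSQ.
Proof.
split; first exact: SQgr.
split.
  move=> a q q'; case: (pi_vK q) => x [Kx ->]; case: (pi_vK q') => y [Ky ->].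
  rewrite -pi_add // !act_pi; try by Kt.
  by rewrite mulrDr pi_add //; Kt.
split.
  move=> a b q; case: (pi_vK q) => x [Kx ->].
  by rewrite !act_pi // mulrDl pi_add //; Kt.
split; first by move=> q; case: (pi_vK q) => x [Kx ->]; rewrite act_pi // mul1r.
split.
  move=> a b q; case: (pi_vK q) => x [Kx ->].
  by rewrite !act_pi ?mulrA //; Kt.
split.
  move=> m n a _ ha [x [hx [Kx <-]]]; exists (a * x); split; first exact: homM HA _ _ _ _ ha hx.
  by split; [Kt | rewrite act_pi].
split.
  move=> q q'; case: (pi_vK q) => x [Kx ->]; case: (pi_vK q') => y [Ky ->].
  rewrite -pi_add // !delta_pi; try by Kt.
  by rewrite (dD HA) pi_add //; Kt.
split.
  move=> n _ [x [hx [Kx <-]]]; exists (d x); split; first exact: dhom HA _ _ hx.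
  by split; [Kt | rewrite delta_pi].
split.
  move=> q; case: (pi_vK q) => x [Kx ->].
  rewrite delta_pi // delta_pi; last by Kt.
  by rewrite (dd HA) zeroSQE.
move=> n a q ha; case: (pi_vK q) => x [Kx ->].
rewrite act_pi // delta_pi; last by Kt.
rewrite (dLeib HA _ ha) pi_add; try by Kt.
rewrite act_pi // delta_pi // act_pi; last by Kt.
by rewrite pi_ksign //; Kt.
Qed.

Definition SQmod : dgmod hom d := DGMod SQ_is_dg.

Lemma comp_pi n x : K x -> hcomp homSQ n (pi x) = pi (hcomp hom n x).
Proof.
move=> Kx.
have Kgr := (graded_subP (Agr HA) (I0 K)).1 (Igr K).
have e : pi x = \sum_(m <- hsupp hom x) pi (hcomp hom m x).
  rewrite -pi_sum; [by rewrite -(sum_comp (Agr HA)) | move=> m _; exact: Kgr].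
rewrite (comp_eq SQgr (supp_uniq (Agr HA) x) _ e).
  by case: ifP => // /negbT H; rewrite (comp_supp H) zeroSQE.
by move=> m _; exists (hcomp hom m x); split; [exact: (comp_hom (Agr HA)) | split=> //; exact: Kgr].
Qed.

Lemma SQ_annih (Jp : A -> Prop) : (forall a x, Jp a -> K x -> L (a * x)) ->
  annihilated_by Jp SQmod.
Proof.
move=> H a Ja q; rewrite /= /actSQ; apply/pi_eq0; first by apply: Imul; exact: valK.
by apply: H => //; exact: valK.
Qed.
End SQ.


Lemma fst_sum (V W : zmodType) (I : Type) (r : seq I) (F : I -> V * W) :
  (\sum_(i <- r) F i).1 = \sum_(i <- r) (F i).1.
Proof. by elim: r => [|i r IH]; rewrite ?big_nil // !big_cons /= IH. Qed.
Lemma snd_sum (V W : zmodType) (I : Type) (r : seq I) (F : I -> V * W) :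
  (\sum_(i <- r) F i).2 = \sum_(i <- r) (F i).2.
Proof. by elim: r => [|i r IH]; rewrite ?big_nil // !big_cons /= IH. Qed.

Lemma graded_shift (V : zmodType) (h : int -> V -> Prop) (k : int) :
  graded_zmod h -> graded_zmod (fun n => h (n + k)).
Proof.
move=> Hg; split; first by move=> n; apply: h0.
split; first by move=> n x y; apply: hB.
split.
  move=> x; case: Hg => _ [_ [He _]]; case: (He x) => s [f [us [hs e]]].
  exists (map (fun n => n - k) s), (fun n => f (n + k)).
  split; first by rewrite map_inj_uniq //; apply: addIr.
  split; first by move=> n /mapP [m ms ->]; rewrite subrK; apply: hs.
  by rewrite big_map; under eq_bigr do rewrite subrK.
move=> s f us hs e n ns.
case: Hg => _ [_ [_ Hu]].
have := Hu (map (fun n => n + k) s) (fun m => f (m - k)) _ _ _ (n + k).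
rewrite addrK; apply.
- by rewrite map_inj_uniq //; apply: addIr.
- by move=> m /mapP [j js ->]; rewrite addrK; apply: hs.
- by rewrite big_map; under eq_bigr do rewrite addrK.
- by apply/mapP; exists n.
Qed.

Lemma graded_prod (V W : zmodType) (h1 : int -> V -> Prop) (h2 : int -> W -> Prop) :
  graded_zmod h1 -> graded_zmod h2 ->
  graded_zmod (fun n (p : V * W) => h1 n p.1 /\ h2 n p.2).
Proof.
move=> H1 H2; split; first by move=> n; split; [apply: (h0 H1 n) | apply: (h0 H2 n)].
split; first by move=> n x y [? ?] [? ?]; split; [apply: (hB H1) | apply: (hB H2)].
split.
  move=> [x y]; case: (H1) => _ [_ [E1 _]]; case: (H2) => _ [_ [E2 _]].
  case: (E1 x) => s1 [f1 [u1 [hs1 e1]]]; case: (E2 y) => s2 [f2 [u2 [hs2 e2]]].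
  exists (undup (s1 ++ s2)), (fun n => (if n \in s1 then f1 n else 0, if n \in s2 then f2 n else 0)).
  split; first exact: undup_uniq.
  split.
    move=> n _ /=; split.
      by case: ifP => ns; [exact: hs1 | exact: (h0 H1)].
    by case: ifP => ns; [exact: hs2 | exact: (h0 H2)].
  apply: injective_projections; rewrite ?fst_sum ?snd_sum /=.
  - rewrite e1 -(sum_mask (t := undup (s1 ++ s2))) ?undup_uniq //.
    by move=> n ns; rewrite mem_undup mem_cat ns.
  - rewrite e2 -(sum_mask (t := undup (s1 ++ s2))) ?undup_uniq //.
    by move=> n ns; rewrite mem_undup mem_cat ns orbT.
move=> s f us hs e n ns.
case: H1 => _ [_ [_ U1]]; case: H2 => _ [_ [_ U2]].
have e1 : \sum_(n <- s) (f n).1 = 0 by rewrite -fst_sum e.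
have e2 : \sum_(n <- s) (f n).2 = 0 by rewrite -snd_sum e.
apply: injective_projections => /=.
  by apply: (U1 s (fun n => (f n).1)) => // m ms; case: (hs m ms).
by apply: (U2 s (fun n => (f n).2)) => // m ms; case: (hs m ms).
Qed.

Section Cone.
Variables (R : comPzRingType) (A : algType R) (hom : int -> A -> Prop) (d : A -> A).
Hypothesis HA : is_dg_algebra hom d.
Variable M : dgmod hom d.
Local Notation act := (@dg_act R A hom d M).
Local Notation mh := (@dg_hom R A hom d M).
Local Notation del := (@dg_delta R A hom d M).
Let Hg := Mgr M.

Definition par (x : M) : M := \sum_(n <- hsupp mh x) ksign n (hcomp mh n x).

Lemma par_super t x : uniq t -> {subset hsupp mh x <= t} ->
  par x = \sum_(n <- t) ksign n (hcomp mh n x).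
Proof.
move=> ut st; rewrite /par -(sum_mask _ ut (supp_uniq Hg x) st).
apply: eq_bigr => n _; case: ifP => // /negbT H; by rewrite (comp_supp H) ksign0.
Qed.

Lemma par_add x y : par (x + y) = par x + par y.
Proof.
set t := undup (hsupp mh x ++ hsupp mh y ++ hsupp mh (x + y)).
have ut : uniq t by apply: undup_uniq.
rewrite (@par_super t x) ?(@par_super t y) ?(@par_super t (x + y)) //.
- by rewrite -big_split; apply: eq_bigr => n _; rewrite (comp_add Hg) ksignD.
- by move=> n nt; rewrite mem_undup !mem_cat nt ?orbT.
- by move=> n nt; rewrite mem_undup !mem_cat nt ?orbT.
- by move=> n nt; rewrite mem_undup !mem_cat nt ?orbT.
Qed.

Lemma par0 : par 0 = 0.
Proof. by apply: (addrI (par 0)); rewrite -par_add !addr0. Qed.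

Lemma par_homog m x : mh m x -> par x = ksign m x.
Proof.
move=> hx; set t := undup (m :: hsupp mh x).
have ut : uniq t by apply: undup_uniq.
rewrite (@par_super t x) //; last by move=> n nt; rewrite mem_undup in_cons nt orbT.
rewrite (eq_bigr (fun n => if n \in [:: m] then ksign m x else 0)).
  rewrite sum_mask //; first by rewrite big_seq1.
  by move=> n; rewrite mem_seq1 => /eqP ->; rewrite mem_undup mem_head.
move=> n _; rewrite (comp_homog Hg _ hx) mem_seq1; case: eqP => [->//|_]; exact: ksign0.
Qed.

Lemma par_delta x : par (del x) = - del (par x).
Proof.
move: x; apply: (hom_ind Hg (P := fun x => (par (del x) = - del (par x))%R)).
- by rewrite delta0 par0 delta0 oppr0.
- by move=> x y /= Hx Hy; rewrite deltaD !par_add Hx Hy deltaD opprD.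
move=> m x hx /=.
rewrite (par_homog hx) (par_homog (delta_hom hx)) ksignS delta_ksign //.
Qed.

Lemma par_act n a x : hom n a -> par (act a x) = ksign n (act a (par x)).
Proof.
move=> ha.
move: x; apply: (hom_ind Hg (P := fun x => (par (act a x) = ksign n (act a (par x)))%R)).
- by rewrite act0r par0 act0r ksign0.
- by move=> x y /= Hx Hy; rewrite actDr !par_add Hx Hy actDr ksignD.
move=> m x hx /=.
rewrite (par_homog hx) (par_homog (act_hom ha hx)) ksign_add act_ksign //.
Qed.

Lemma ksign_pair n (p : M * M) : ksign n p = (ksign n p.1, ksign n p.2).
Proof. by case: p => x y; rewrite /ksign; case: ifP. Qed.

Definition cact (a : A) (p : M * M) : M * M := (act a p.1, act a p.2).
Definition chom (n : int) (p : M * M) : Prop := mh n p.1 /\ mh (n + 1) p.2.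
Definition cdel (p : M * M) : M * M := (del p.1 + par p.2, del p.2).

Lemma cone_is_dg : is_dg_module hom d cact chom cdel.
Proof.
split; first exact: (graded_prod Hg (graded_shift 1 Hg)).
split; first by move=> a [x y] [x' y']; rewrite /cact /= !actDr.
split; first by move=> a b [x y]; rewrite /cact /= !actDl.
split; first by move=> [x y]; rewrite /cact /= !act1.
split; first by move=> a b [x y]; rewrite /cact /= !actM.
split.
  move=> m n a [x y] ha [hx hy]; split; first exact: act_hom ha hx.
  by rewrite /= -addrA; apply: act_hom ha hy.
split.
  by move=> [x y] [x' y']; rewrite /cdel /= !deltaD par_add addrACA.
split.
  move=> n [x y] [hx hy]; split; rewrite /=.
    apply: (hD Hg); first exact: delta_hom hx.
    by rewrite (par_homog hy); apply: (h_ksign Hg).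
  exact: delta_hom hy.
split.
  move=> [x y]; rewrite /cdel /= deltaD !delta2 par_delta add0r subrr //.
move=> n a [x y] ha; rewrite /cdel /cact /= ksign_pair /=.
rewrite (deltaLeib _ ha) (deltaLeib _ ha) actDr ksignD (par_act y ha).
by apply: injective_projections => /=; rewrite ?addrA.
Qed.

Definition Cone : dgmod hom d := DGMod cone_is_dg.

Lemma shift_is_dg : is_dg_module hom d act (fun n => mh (n + 1)) del.
Proof.
split; first exact: graded_shift 1 Hg.
split; first exact: actDr.
split; first exact: actDl.
split; first exact: act1.
split; first exact: actM.
split; first by move=> m n a x ha hx; rewrite -addrA; apply: act_hom ha hx.
split; first exact: deltaD.
split; first by move=> n x hx; apply: delta_hom.
split; first exact: delta2.
move=> n a x ha; exact: deltaLeib.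
Qed.

Definition Shift : dgmod hom d := DGMod shift_is_dg.

Lemma cycle_boundary (Jp : A -> Prop) :
  dg_semisimple_quot hom d Jp -> annihilated_by Jp M ->
  forall k z, mh k z -> del z = 0 -> exists t, del t = z.
Proof.
move=> Hss Han k z hz dz.
have HanC : annihilated_by Jp Cone by move=> a Ja [x y]; rewrite /= /cact /= !Han.
have HanS : annihilated_by Jp Shift by move=> a Ja x; rewrite /= Han.
have Hf : dg_morph (M1 := M) (M2 := Cone) (fun x => (x, 0)).
  split; first by move=> x y; apply: injective_projections => /=; rewrite ?addr0.
  split; first by move=> a x; rewrite /= /cact /= act0r.
  split; first by move=> n x hx; split => //; apply: (h0 Hg).
  by move=> x; rewrite /= /cdel /= par0 delta0 addr0.
have Hgm : dg_morph (M1 := Cone) (M2 := Shift) (fun p => p.2).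
  split; first by move=> [x y] [x' y'].
  split; first by move=> a [x y].
  split; first by move=> n [x y] [].
  by move=> [x y].
have Hinj : injective (fun x : M => ((x, 0) : Cone)) by move=> x y /(congr1 fst).
have Hsur : forall w : Shift, exists y : Cone, y.2 = w by move=> w; exists (0, w).
have Hker : forall y : Cone, y.2 = 0 <-> exists x, y = (x, 0).
  move=> [x y]; split; first by move=> /= ->; exists x.
  by case=> x' [_ ->].
have [s [[sD [_ [_ sdel]]] gs]] := Hss M Cone Shift Han HanC HanS _ _ Hf Hgm Hinj Hsur Hker.
have s0 : s 0 = 0 by apply: (addrI (s 0)); rewrite -sD !addr0.
have := sdel z; rewrite dz s0 => /(congr1 fst) /= E.
have e2 := gs z; rewrite /= in e2.
rewrite e2 (par_homog hz) in E.
exists (- ksign k (s z).1); rewrite deltaN delta_ksign.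
have -> : del (s z).1 = - ksign k z by apply/eqP; rewrite -addr_eq0 -E.
by rewrite ksignN ksignK opprK.
Qed.

End Cone.


Section Acyc.
Variables (R : comPzRingType) (A : algType R) (hom : int -> A -> Prop) (d : A -> A).
Hypothesis HA : is_dg_algebra hom d.

Lemma top_ideal : is_left_dg_ideal hom d (fun _ => True).
Proof. by do 4 (split => //); move=> *. Qed.

Definition Ktop := DGI top_ideal.
Definition LJ := DGI (J_ideal HA).

Lemma pow_nil (Hnil : dgrad_nilpotent hom d) j : dgrad hom d j -> exists n, j ^+ n = 0.
Proof.
move=> Jj; case: Hnil => n Hn; exists n.
have := Hn (fun _ => j) (fun _ => Jj).
by rewrite prodr_const card_ord.
Qed.

Lemma theorem_acyclic : dg_semisimple_quot hom d (dgrad hom d) ->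
  dgrad_nilpotent hom d -> acyclic d.
Proof.
move=> Hss Hnil.
pose Q := SQmod Ktop LJ HA.
have Han : annihilated_by (dgrad hom d) Q.
  by apply: SQ_annih => a x Ja _; apply: Jmulr.
have hz : @dg_hom R A hom d Q 0 (pi Ktop LJ 1) by exists 1; split; [exact: (hom1 HA) | split].
have dz : @dg_delta R A hom d Q (pi Ktop LJ 1) = 0.
  by rewrite /= (delta_pi LJ HA) // (d1 HA) (zeroSQE Ktop LJ).
have [t Ht] := cycle_boundary Hss Han hz dz.
have : pi Ktop LJ (d (val t)) = pi Ktop LJ 1.
  by rewrite -Ht.
move/(@pi_eq R A hom d Ktop LJ (d (val t)) 1 I I) => Jt.
set z0 := val t in Jt.
pose zz := hcomp hom (-1) z0.
have hzz : hom (-1) zz by apply: (comp_hom (Agr HA)).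
have dzz : d zz = hcomp hom 0 (d z0).
  by rewrite /zz -(comp_d HA) addNr.
set j := 1 - d zz.
have Jj : dgrad hom d j.
  have := Jcomp HA 0 Jt; rewrite (compB (Agr HA)) (comp_homog (Agr HA) _ (hom1 HA)) eqxx -dzz.
  by move=> H; rewrite /j -opprB; exact: JN H.
have hj : hom 0 j.
  apply: (homB HA); first exact: hom1 HA.
  by rewrite -(addNr 1); apply: (dhom HA).
have dj : d j = 0 by rewrite (dB HA) (d1 HA) (dd HA) subrr.
have [n jn] := pow_nil Hnil Jj.
pose v := \sum_(i < n) j ^+ i.
have hji : forall i, hom 0 (j ^+ i).
  elim=> [|i IH]; first exact: hom1 HA.
  by rewrite exprS -(addr0 0); apply: (homM HA).
have dji : forall i, d (j ^+ i) = 0.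
  elim=> [|i IH]; first exact: d1 HA.
  by rewrite exprS (dLeib HA _ hj) dj IH mul0r mulr0 ksign0 addr0.
have hv : hom 0 v by apply: (h_sum (Agr HA)) => i _.
have dv : d v = 0 by rewrite /v (d_sum HA) big1 // => i _.
have jv : (1 - j) * v = 1.
  by rewrite -opprB mulNr -subrX1 jn sub0r opprK.
pose w := zz * v.
have hw : hom (-1 + 0) w by apply: (homM HA).
have dw : d w = 1.
  rewrite /w (dLeib HA _ hzz) dv mulr0 ksign0 addr0.
  have -> : d zz = 1 - j by rewrite /j opprB addrC subrK.
  exact: jv.
move=> x; split; last by case=> y ->; apply: (dd HA).
move=> dx; exists (w * x).
by rewrite (dLeib HA _ hw) dw mul1r dx mulr0 ksign0 addr0.
Qed.
End Acyc.


Section Compl.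
Variables (R : comPzRingType) (A : algType R) (hom : int -> A -> Prop) (d : A -> A).
Hypothesis HA : is_dg_algebra hom d.
Hypothesis Hss : dg_semisimple_quot hom d (dgrad hom d).

Lemma pi_tr (K K' L : dgideal hom d) : (forall x, K' x -> K x) ->
  forall y, K' y -> pi K L (val (pi K' L y)) = pi K L y.
Proof. move=> H y Ky; apply/(pi_eq L); [apply: H; exact: valK | exact: H | exact: Lpi]. Qed.

Lemma pi_co (K L L' : dgideal hom d) : (forall x, L x -> L' x) ->
  forall y, K y -> pi K L' (val (pi K L y)) = pi K L' y.
Proof. move=> H y Ky; apply/(pi_eq L'); [exact: valK | exact: Ky | apply: H; exact: Lpi]. Qed.

Lemma Kcomp (K : dgideal hom d) x n : K x -> K (hcomp hom n x).
Proof. move=> Kx; exact: ((graded_subP (Agr HA) (I0 K)).1 (Igr K) x Kx n). Qed.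

Definition compl_spec (K L I I' : dgideal hom d) :=
  (forall x, L x -> I' x) /\ (forall x, I' x -> K x) /\ (forall x, I x -> I' x -> L x) /\
  (forall x, K x -> exists e, I' e /\ I (x - e)).

Lemma complement (K L I : dgideal hom d) : (forall x, L x -> I x) -> (forall x, I x -> K x) ->
  (forall a x, dgrad hom d a -> K x -> L (a * x)) -> exists I', compl_spec K L I I'.
Proof.
move=> LI IK JKL.
pose f := fun q : SQmod I L HA => (pi K L (val q) : SQmod K L HA).
pose g := fun q : SQmod K L HA => (pi K I (val q) : SQmod K I HA).
have LK : forall x, L x -> K x by move=> x /LI /IK.
have fpi : forall y, I y -> f (pi I L y) = pi K L y by move=> y Iy; rewrite /f pi_tr.
have gpi : forall y, K y -> g (pi K L y) = pi K I y by move=> y Ky; rewrite /g pi_co.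
have An1 : annihilated_by (dgrad hom d) (SQmod I L HA).
  by apply: SQ_annih => a x Ja Ix; apply: JKL => //; apply: IK.
have An2 : annihilated_by (dgrad hom d) (SQmod K L HA) by apply: SQ_annih.
have An3 : annihilated_by (dgrad hom d) (SQmod K I HA).
  by apply: SQ_annih => a x Ja Kx; apply: LI; apply: JKL.
have Hf : dg_morph f.
  split.
    move=> q q'; case: (pi_vK q) => y [Iy ->]; case: (pi_vK q') => y' [Iy' ->].
    rewrite -(pi_add L Iy Iy') !fpi ?(pi_add L) //; try apply: ID => //; exact: IK.
  split.
    move=> a q; case: (pi_vK q) => y [Iy ->]; rewrite /= (act_pi L a Iy) !fpi //; last exact: Imul.
    by rewrite act_pi //; apply: IK.
  split.
    by move=> n q [x [hx [Ix <-]]]; exists x; split=> //; split; [exact: IK | rewrite fpi].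
  move=> q; case: (pi_vK q) => y [Iy ->]; rewrite /= (delta_pi L HA Iy) !fpi //; last exact: Id.
  by rewrite delta_pi //; apply: IK.
have Hg : dg_morph g.
  split.
    move=> q q'; case: (pi_vK q) => y [Ky ->]; case: (pi_vK q') => y' [Ky' ->].
    rewrite -(pi_add L Ky Ky') !gpi ?(pi_add I) //; apply: ID => //.
  split.
    move=> a q; case: (pi_vK q) => y [Ky ->]; rewrite /= (act_pi L a Ky) !gpi //; last exact: Imul.
    by rewrite act_pi.
  split.
    by move=> n q [x [hx [Kx <-]]]; exists x; split=> //; split; [exact: Kx | rewrite gpi].
  move=> q; case: (pi_vK q) => y [Ky ->]; rewrite /= (delta_pi L HA Ky) !gpi //; last exact: Id.
  by rewrite delta_pi.
have Hinj : injective f.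
  move=> q q'; case: (pi_vK q) => y [Iy ->]; case: (pi_vK q') => y' [Iy' ->].
  rewrite !fpi // => /(pi_eq L (IK _ Iy) (IK _ Iy')) H.
  by apply/(pi_eq L).
have Hsur : forall z : SQmod K I HA, exists y, g y = z.
  move=> z; case: (pi_vK z) => y [Ky ->]; exists (pi K L y : SQmod K L HA); exact: gpi.
have Hker : forall y : SQmod K L HA, g y = 0 <-> exists x, y = f x.
  move=> q; case: (pi_vK q) => y [Ky ->]; rewrite gpi //; split.
    by move/(pi_eq0 I Ky) => Iy; exists (pi I L y); rewrite fpi.
  case=> q'; case: (pi_vK q') => y' [Iy' ->]; rewrite fpi //.
  move/(pi_eq L Ky (IK _ Iy')) => H; apply/(pi_eq0 I) => //.
  by rewrite -(subrK y' y); apply: ID => //; apply: LI.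
have [s [[sD [sA [sH sdel]]] gs]] := Hss An1 An2 An3 Hf Hg Hinj Hsur Hker.
have s0 : s 0 = 0 by apply: (addrI (s 0)); rewrite -sD !addr0.
have sN : forall r, s (- r) = - s r.
  by move=> r; apply/eqP; rewrite -addr_eq0 -sD addNr s0.
pose P := fun x => K x /\ exists r : SQmod K I HA, pi K L x = s r.
have P0 : P 0 by split; [exact: I0 | exists 0; rewrite s0 zeroSQE].
have PI : is_left_dg_ideal hom d P.
  split; first exact: P0.
  split.
    move=> x y [Kx [r Hr]] [Ky [r' Hr']]; split; first exact: IB.
    by exists (r - r'); rewrite (pi_sub L Kx Ky) sD sN Hr Hr'.
  split.
    move=> a x [Kx [r Hr]]; split; first exact: Imul.
    by exists (dg_act a r); rewrite sA -Hr /= act_pi.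
  split.
    apply/(graded_subP (Agr HA) P0) => x [Kx [r Hr]] n; split; first exact: Kcomp.
    exists (hcomp (@dg_hom R A hom d (SQmod K I HA)) n r).
    rewrite -(comp_pi L HA n Kx) Hr.
    have := comp_shift (Mgr (SQmod K I HA)) (Mgr (SQmod K L HA)) (phi := s) (k := 0) sD _ n r.
    by rewrite addr0; apply=> m v hv; rewrite addr0; apply: sH.
  move=> x [Kx [r Hr]]; split; first exact: Id.
  by exists (dg_delta r); rewrite sdel -Hr /= delta_pi.
exists (DGI PI); split.
  move=> x Lx; split; first exact: LK.
  by exists 0; rewrite s0; apply/(pi_eq0 L) => //; exact: LK.
split; first by move=> x [].
split.
  move=> x Ix [Kx [r Hr]].
  have : g (s r) = r by apply: gs.
  rewrite -Hr gpi //; have -> : pi K I x = 0 by apply/(pi_eq0 I).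
  move=> r0; apply/(pi_eq0 L Kx); by rewrite Hr -r0 s0.
move=> x Kx; exists (val (s (pi K I x))); split.
  split; first exact: valK.
  by exists (pi K I x); rewrite pi_val.
have := gs (pi K I x); rewrite /g => /(pi_eq I (valK _) Kx) H.
by rewrite -opprB; apply: IN.
Qed.
End Compl.


Lemma subrACA' (V : zmodType) (x y z t : V) : (x - y) - (z - t) = (x - z) - (y - t).
Proof. by rewrite !opprD !opprK addrACA. Qed.

Section Layer.
Variables (R : comPzRingType) (A : algType R) (hom : int -> A -> Prop) (d : A -> A).
Hypothesis HA : is_dg_algebra hom d.
Hypothesis Hss : dg_semisimple_quot hom d (dgrad hom d).
Hypothesis Hart : left_dg_artinian hom d.

Lemma cap_ideal (I1 I2 : dgideal hom d) : is_left_dg_ideal hom d (fun x => I1 x /\ I2 x).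
Proof.
split; first by split; apply: I0.
split; first by move=> x y [? ?] [? ?]; split; apply: IB.
split; first by move=> a x [? ?]; split; apply: Imul.
split; last by move=> x [? ?]; split; apply: Id.
move=> x [H1 H2] s f us hs e n ns; split.
  exact: (Igr I1 x H1 s f us hs e n ns).
exact: (Igr I2 x H2 s f us hs e n ns).
Qed.
Definition Icap (I1 I2 : dgideal hom d) := DGI (cap_ideal I1 I2).

Lemma plus_ideal (I K L : dgideal hom d) :
  is_left_dg_ideal hom d (fun x => K x /\ exists y, I y /\ K y /\ L (x - y)).
Proof.
have P0 : K 0 /\ exists y, I y /\ K y /\ L (0 - y).
  by split; [exact: I0 | exists 0; rewrite subrr; split; [|split]; apply: I0].
split; first exact: P0.
split.
  move=> x x' [Kx [y [Iy [Ky Lxy]]]] [Kx' [y' [Iy' [Ky' Lxy']]]].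
  split; first exact: IB.
  by exists (y - y'); split; [exact: IB | split; [exact: IB | rewrite subrACA'; exact: IB]].
split.
  move=> a x [Kx [y [Iy [Ky Lxy]]]]; split; first exact: Imul.
  by exists (a * y); split; [exact: Imul | split; [exact: Imul | rewrite -mulrBr; exact: Imul]].
split.
  apply/(graded_subP (Agr HA) P0) => x [Kx [y [Iy [Ky Lxy]]]] n.
  split; first exact: Kcomp.
  exists (hcomp hom n y); split; first exact: Kcomp.
  by split; [exact: Kcomp | rewrite -(compB (Agr HA)); exact: Kcomp].
move=> x [Kx [y [Iy [Ky Lxy]]]]; split; first exact: Id.
by exists (d y); split; [exact: Id | split; [exact: Id | rewrite -(dB HA); exact: Id]].
Qed.

Definition Compl (K L I : dgideal hom d) : dgideal hom d :=
  epsilon (inhabits K) (fun E => compl_spec K L I E).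

Lemma Compl_spec (K L I : dgideal hom d) : (forall x, L x -> I x) -> (forall x, I x -> K x) ->
  (forall a x, dgrad hom d a -> K x -> L (a * x)) -> compl_spec K L I (Compl K L I).
Proof.
move=> H1 H2 H3; apply: (epsilon_spec (inhabits K) (fun E => compl_spec K L I E)).
exact: complement.
Qed.

Fixpoint Eseq (K L : dgideal hom d) (Ip : nat -> dgideal hom d) (k : nat) : dgideal hom d :=
  match k with
  | 0 => Compl K L (Ip 0)
  | k'.+1 => Compl (Eseq K L Ip k') L (Icap (Ip k'.+1) (Eseq K L Ip k'))
  end.

Lemma layer (K L : dgideal hom d) (I : nat -> dgideal hom d) :
  (forall x, L x -> K x) -> (forall a x, dgrad hom d a -> K x -> L (a * x)) ->
  (forall k x, I k x -> I k.+1 x) ->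
  exists N, forall k, (N <= k)%N -> forall x, I k x -> K x ->
    exists y, I N y /\ K y /\ L (x - y).
Proof.
move=> LK JKL Hinc.
pose Ip k := DGI (plus_ideal (I k) K L).
have LIp : forall k x, L x -> Ip k x.
  move=> k x Lx; split; first exact: LK.
  by exists 0; rewrite subr0; split; [|split]; try apply: I0.
have IpK : forall k x, Ip k x -> K x by move=> k x [].
have Ipinc : forall k x, Ip k x -> Ip k.+1 x.
  by move=> k x [Kx [y [Iy Hy]]]; split=> //; exists y; split=> //; apply: Hinc.
pose E := Eseq K L Ip.
have Inv : forall k, [/\ forall x, L x -> E k x, forall x, E k x -> K x,
    forall x, Ip k x -> E k x -> L x & forall x, K x -> exists e, E k e /\ Ip k (x - e)].
  elim=> [|k [H1 H2 H3 H4]].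
    have [S1 [S2 [S3 S4]]] := Compl_spec (LIp 0) (IpK 0) JKL.
    by split.
  have [S1 [S2 [S3 S4]]] : compl_spec (E k) L (Icap (Ip k.+1) (E k)) (E k.+1).
    apply: Compl_spec.
    - by move=> x Lx; split; [exact: LIp | exact: H1].
    - by move=> x [].
    - by move=> a x Ja Ex; apply: JKL => //; apply: H2.
  split.
  - exact: S1.
  - by move=> x /S2; apply: H2.
  - by move=> x Ipx Ex; apply: (S3 x) => //; split=> //; apply: S2.
  - move=> x Kx; have [e [Ee Ipe]] := H4 x Kx.
    have [e' [Ee' [Ipe' _]]] := S4 e Ee.
    exists e'; split=> //.
    have -> : x - e' = (x - e) + (e - e') by rewrite addrA subrK.
    by apply: ID => //; apply: Ipinc.
have Edesc : forall k x, E k.+1 x -> E k x.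
  move=> k x; have [S1 [S2 _]] : compl_spec (E k) L (Icap (Ip k.+1) (E k)) (E k.+1).
    apply: Compl_spec.
    - by move=> y Ly; split; [exact: LIp | case: (Inv k) => H1 _ _ _; exact: H1].
    - by move=> y [].
    - by move=> a y Ja Ey; apply: JKL => //; case: (Inv k) => _ H2 _ _; apply: H2.
  exact: S2.
have [N HN] := Hart (I := fun k => E k) (fun k => dgi_ax (E k)) Edesc.
have step : forall k, (N <= k)%N -> forall x, Ip k.+1 x -> Ip k x.
  move=> k Nk x Ipx.
  case: (Inv k) => _ _ _ H4; have [e [Ee Ipe]] := H4 x (IpK _ _ Ipx).
  have Ipe1 : Ip k.+1 e.
    have -> : e = x - (x - e) by rewrite opprB addrC subrK.
    by apply: IB => //; apply: Ipinc.
  have Ee1 : E k.+1 e by apply/(HN k.+1 (leqW Nk)); apply/(HN k Nk).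
  case: (Inv k.+1) => _ _ H3 _; have Le := H3 e Ipe1 Ee1.
  by rewrite -(subrK e x); apply: ID => //; apply: LIp.
have upto : forall m x, Ip (N + m)%N x -> Ip N x.
  elim=> [|m IH] x; first by rewrite addn0.
  by rewrite addnS => H; apply: IH; apply: step => //; apply: leq_addr.
exists N => k Nk x Ix Kx.
have : Ip k x by split=> //; exists x; rewrite subrr; split=> //; split=> //; apply: I0.
rewrite -(subnKC Nk) => /upto [_ [y [Iy [Ky Lxy]]]].
by exists y.
Qed.

End Layer.


Section Socle.
Variables (R : comPzRingType) (A : algType R) (hom : int -> A -> Prop) (d : A -> A).
Hypothesis HA : is_dg_algebra hom d.

Fixpoint Sp (j : nat) (x : A) : Prop :=
  match j with
  | 0 => x = 0
  | j'.+1 => forall c, dgrad hom d c -> Sp j' (c * x)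
  end.

Lemma Sp_ideal j : is_left_dg_ideal hom d (Sp j).
Proof.
elim: j => [|j IH].
  split=> //=.
  split; first by move=> x y -> ->; rewrite subr0.
  split; first by move=> a x ->; rewrite mulr0.
  split; last by move=> x ->; apply: (d0 HA).
  move=> x -> s f us hs e n ns.
  by case: (Agr HA) => _ [_ [_ Hu]]; apply: (Hu s f us hs (esym e)).
pose S := DGI IH.
have S0 : Sp j.+1 0 by move=> c _; rewrite mulr0; exact: (I0 S).
split; first exact: S0.
split.
  by move=> x y Hx Hy c Jc; rewrite mulrBr; apply: (IB (I := S)); [apply: Hx | apply: Hy].
split.
  by move=> a x Hx c Jc; rewrite mulrA; apply: Hx; apply: Jmulr.
split.
  apply/(graded_subP (Agr HA) S0) => x Hx n c Jc.
  rewrite (sum_comp (Agr HA) c) mulr_suml; apply: (I_sum (I := S)) => m _.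
  have hcm := comp_hom (Agr HA) m c.
  rewrite -(comp_mull HA n x hcm).
  apply: (Kcomp HA (K := S)); apply: Hx; exact: Jcomp.
move=> x Hx c Jc.
rewrite (sum_comp (Agr HA) c) mulr_suml; apply: (I_sum (I := S)) => m _.
have hcm := comp_hom (Agr HA) m c.
have Jcm : dgrad hom d (hcomp hom m c) by exact: Jcomp.
have -> : hcomp hom m c * d x = ksign m (d (hcomp hom m c * x) - d (hcomp hom m c) * x).
  by rewrite (dLeib HA _ hcm) [d _ * x + _]addrC addrK ksignK.
apply: (I_ksign (I := S)); apply: (IB (I := S)).
  by apply: (Id (I := S)); apply: Hx.
by apply: Hx; apply: Jd.
Qed.

Definition Sid j := DGI (Sp_ideal j).

Lemma Sp_mono j x : Sp j x -> Sp j.+1 x.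
Proof.
elim: j x => [|j IH] x /=; first by move=> -> c _; rewrite mulr0.
by move=> H c Jc; apply: IH; apply: H.
Qed.

Lemma Sp_prod j x : (forall f : 'I_j -> A, (forall i, dgrad hom d (f i)) -> (\prod_(i < j) f i) * x = 0) ->
  Sp j x.
Proof.
elim: j x => [|j IH] x H /=.
  by have := H (fun i => 0) (fun i => @J0 _ _ hom d); rewrite big_ord0 mul1r.
move=> c Jc; apply: IH => f Jf.
pose f' := fun i : 'I_j.+1 => oapp f c (unlift ord_max i).
have := H f'.
  rewrite big_ord_recr /= /f' unlift_none /= mulrA.
  have -> : \prod_(i < j) oapp f c (unlift ord_max (widen_ord (leqnSn j) i)) = \prod_(i < j) f i.
    apply: eq_bigr => i _.
    have -> : widen_ord (leqnSn j) i = lift ord_max i by apply: val_inj; rewrite [RHS]lift_max.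
    by rewrite liftK.
  apply.
move=> i; rewrite /f'; case: (unlift ord_max i) => [i'|] //=.
Qed.

End Socle.

Theorem theorem4p1 (R : comPzRingType) (A : algType R)
    (hom : int -> A -> Prop) (d : A -> A) :
  is_dg_algebra hom d ->
  left_dg_semiprimary hom d ->
  left_dg_artinian hom d ->
  dgrad_nilpotent hom d ->
  left_dg_noetherian hom d /\ acyclic d.
Proof.
move=> HA [Hss _] Hart Hnil; split; last exact: theorem_acyclic HA Hss Hnil.
move=> I HI Hinc.
pose Ic k := DGI (HI k).
have mono : forall m k, (m <= k)%N -> forall x, I m x -> I k x.
  move=> m k /subnKC <-; elim: (k - m)%N => [|t IHt] x; first by rewrite addn0.
  by rewrite addnS => /IHt; apply: Hinc.
have key : forall j, exists N, forall k, (N <= k)%N -> forall x, I k x -> Sp hom d j x -> I N x.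
  elim=> [|j [N1 H1]].
    by exists 0%N => k _ x _ /= ->; exact: (I0 (Ic 0%N)).
  have [N2 H2] := layer HA Hss Hart (K := Sid HA j.+1) (L := Sid HA j) (I := Ic)
     (@Sp_mono _ _ hom d j) (fun a x Ja Sx => Sx a Ja) Hinc.
  exists (maxn N1 N2) => k Hk x Ix Sx.
  have [y [Iy [Sy Lxy]]] := H2 k (leq_trans (leq_maxr _ _) Hk) x Ix Sx.
  have IyN : I (maxn N1 N2) y by apply: (mono N2) => //; apply: leq_maxr.
  have Iyk : I k y by apply: (mono _ _ Hk).
  have H : I N1 (x - y).
    apply: (H1 k (leq_trans (leq_maxl _ _) Hk)) => //.
    exact: (IB (I := Ic k)).
  rewrite -(subrK y x); apply: (ID (I := Ic (maxn N1 N2))) => //.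
  by apply: (mono N1) => //; apply: leq_maxl.
case: (Hnil) => n Hn.
have [N HN] := key n.
exists N => k Hk x; split; last exact: mono.
move=> Ix; apply: (HN k Hk x Ix); apply: Sp_prod => f Jf.
by rewrite (Hn f Jf) mul0r.
Qed.
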